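(* Let $S_4$ be the symmetric group of degree 4. The following d-identities form a basis of d-identities of $S_4$ (i.e. they all hold in $S_4$, and every group satisfying all of them is isomorphic to a section of $S_4$): (1) $\omega_{24}=\bigvee_{0\le i<j\le 24}(x_i=x_j)$; (2) $(x_1^4=1)\vee(x_2^4=1)\vee((x_1x_2)^4=1)\vee((x_1x_2^2)^4=1)$; (3) $(x^3=1)\vee(x^4=1)$; (4) $(x_1^6=1)\vee(x_2^6=1)\vee(x_1=x_2)\vee(x_1x_2=1)\vee((x_1x_2)^3=1)$; (5) $(x_1^3=1)\vee(x_2^3=1)\vee(x_3^3=1)\vee((x_1^{-1}x_2)^3=1)\vee((x_1^{-1}x_3)^3=1)\vee((x_2^{-1}x_3)^3=1)\vee\theta(x_1,x_2,x_3)$.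
   Context: A d-identity (disjunctive identity) is a universally quantified formula $\forall x_1\dots x_k\,[(f_1=1)\vee\dots\vee(f_n=1)]$ with the $f_i$ words in the free group on the variables; $u=v$ abbreviates $uv^{-1}=1$. A group satisfies it if it is true for all assignments. For a group $G$, $\mathrm{dvar}(G)$ is the class of groups satisfying every d-identity satisfied by $G$; for finite $G$ it is the class of groups isomorphic to sections (quotients of subgroups) of $G$. A set of d-identities is a basis of d-identities of $G$ if all its members hold in $G$ and every group satisfying them lies in $\mathrm{dvar}(G)$. Notation: ''$u\in\langle v\rangle$'' abbreviates $(u=1)\vee(u=v)\vee(u=v^2)\vee(u=v^3)$, and $\theta(z_1,z_2,z_3)$ denotes $\Big[\bigvee_{i\ne j} z_i\in\langle z_j\rangle\Big]\vee\Big[\bigvee_{\sigma\in S_3} z_{\sigma(1)}\in\langle z_{\sigma(2)}z_{\sigma(3)}\rangle\Big]\vee\Big[\bigvee_{\sigma\in S_3} z_{\sigma(1)}z_{\sigma(2)}\in\langle z_{\sigma(2)}z_{\sigma(3)}\rangle\Big]$ with $i,j\in\{1,2,3\}$. *)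

(* Defs.v *)
From mathcomp Require Import all_boot all_fingroup.
Set Implicit Arguments. Unset Strict Implicit. Unset Printing Implicit Defensive.

Record absgroup := AbsGroup {
  carrier :> Type;
  gmul : carrier -> carrier -> carrier;
  ginv : carrier -> carrier;
  gone : carrier;
  gmulA : forall x y z, gmul x (gmul y z) = gmul (gmul x y) z;
  gmul1 : forall x, gmul gone x = x;
  gmulV : forall x, gmul (ginv x) x = gone
}.

Definition gpow (G : absgroup) (x : G) (n : nat) : G := iter n (gmul x) (gone G).

Definition fin_group (gT : finGroupType) : absgroup :=
  @AbsGroup gT (fun x y => (x * y)%g) (fun x => (x^-1)%g) 1%g
    (@mulgA gT) (@mul1g gT) (@mulVg gT).

Definition S4 : finGroupType := {perm 'I_4}.

Definition inpow (G : absgroup) (u v : G) : Prop :=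
  u = gone G \/ u = v \/ u = gpow v 2 \/ u = gpow v 3.

(* theta(z_1,z_2,z_3); z is indexed by 'I_3; the disjunctions over i <> j and
   over sigma in S_3 are written as existentials over distinct indices. *)
Definition theta (G : absgroup) (z : 'I_3 -> G) : Prop :=
  (exists i j : 'I_3, i != j /\ inpow (z i) (z j)) \/
  (exists i j k : 'I_3, [/\ i != j, j != k & i != k] /\
      inpow (z i) (gmul (z j) (z k))) \/
  (exists i j k : 'I_3, [/\ i != j, j != k & i != k] /\
      inpow (gmul (z i) (z j)) (gmul (z j) (z k))).

Definition dId1 (G : absgroup) : Prop :=
  forall x : 'I_25 -> G, exists i j : 'I_25, i < j /\ x i = x j.

Definition dId2 (G : absgroup) : Prop :=
  forall x1 x2 : G,
    gpow x1 4 = gone G \/ gpow x2 4 = gone G \/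
    gpow (gmul x1 x2) 4 = gone G \/ gpow (gmul x1 (gpow x2 2)) 4 = gone G.

Definition dId3 (G : absgroup) : Prop :=
  forall x : G, gpow x 3 = gone G \/ gpow x 4 = gone G.

Definition dId4 (G : absgroup) : Prop :=
  forall x1 x2 : G,
    gpow x1 6 = gone G \/ gpow x2 6 = gone G \/ x1 = x2 \/
    gmul x1 x2 = gone G \/ gpow (gmul x1 x2) 3 = gone G.

Definition dId5 (G : absgroup) : Prop :=
  forall x1 x2 x3 : G,
    gpow x1 3 = gone G \/ gpow x2 3 = gone G \/ gpow x3 3 = gone G \/
    gpow (gmul (ginv x1) x2) 3 = gone G \/
    gpow (gmul (ginv x1) x3) 3 = gone G \/
    gpow (gmul (ginv x2) x3) 3 = gone G \/
    theta [ffun i : 'I_3 => if i == 0 :> nat then x1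
                            else if i == 1 :> nat then x2 else x3].

Definition satisfies_basis (G : absgroup) : Prop :=
  [/\ dId1 G, dId2 G, dId3 G, dId4 G & dId5 G].

Definition section_of (gT : finGroupType) (G : absgroup) : Prop :=
  exists (H K : {group gT}) (f : G -> coset_of K),
    [/\ (K <| H)%g,
        injective f,
        (forall x y : G, f (gmul x y) = (f x * f y)%g) &
        (forall c : coset_of K, c \in (H / K)%g <-> exists x : G, f x = c)].

(* Main.v *)
From HB Require Import structures.
Require Import Defs.
From mathcomp Require Import all_boot all_fingroup.
From mathcomp Require Import cyclic pgroup sylow.
From Stdlib Require Import Classical ClassicalEpsilon Setoid.
Set Implicit Arguments. Unset Strict Implicit. Unset Printing Implicit Defensive.
Module MA.
Local Open Scope group_scope.

Definition inpowT (gT : finGroupType) (u v : gT) : Prop :=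
  u = 1 \/ u = v \/ u = v ^+ 2 \/ u = v ^+ 3.

Definition thetaT (gT : finGroupType) (z : 'I_3 -> gT) : Prop :=
  (exists i j : 'I_3, i != j /\ inpowT (z i) (z j)) \/
  (exists i j k : 'I_3, [/\ i != j, j != k & i != k] /\
      inpowT (z i) (z j * z k)) \/
  (exists i j k : 'I_3, [/\ i != j, j != k & i != k] /\
      inpowT (z i * z j) (z j * z k)).

Definition z3 (T : Type) (x1 x2 x3 : T) : {ffun 'I_3 -> T} :=
  [ffun i : 'I_3 => if i == 0%N :> nat then x1 else if i == 1%N :> nat then x2 else x3].

Definition tI1 (gT : finGroupType) := #|gT| <= 24.
Definition tI2 (gT : finGroupType) := forall x1 x2 : gT,
  x1 ^+ 4 = 1 \/ x2 ^+ 4 = 1 \/ (x1 * x2) ^+ 4 = 1 \/ (x1 * x2 ^+ 2) ^+ 4 = 1.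
Definition tI3 (gT : finGroupType) := forall x : gT, x ^+ 3 = 1 \/ x ^+ 4 = 1.
Definition tI4 (gT : finGroupType) := forall x1 x2 : gT,
  x1 ^+ 6 = 1 \/ x2 ^+ 6 = 1 \/ x1 = x2 \/ x1 * x2 = 1 \/ (x1 * x2) ^+ 3 = 1.
Definition tI5 (gT : finGroupType) := forall x1 x2 x3 : gT,
  x1 ^+ 3 = 1 \/ x2 ^+ 3 = 1 \/ x3 ^+ 3 = 1 \/
  (x1^-1 * x2) ^+ 3 = 1 \/ (x1^-1 * x3) ^+ 3 = 1 \/ (x2^-1 * x3) ^+ 3 = 1 \/
  thetaT (z3 x1 x2 x3).

Section Transport.
Variables (G : absgroup) (gT : finGroupType) (f : gT -> G) (g : G -> gT).
Hypothesis fM : forall x y, f (x * y) = gmul (f x) (f y).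
Hypothesis fK : cancel g f.
Hypothesis gK : cancel f g.

Lemma f_inj : injective f. Proof. exact: can_inj gK. Qed.

Lemma f1 : f 1 = gone G.
Proof.
have := fM (g (gone G)) 1; rewrite fK gmul1 => /f_inj; rewrite mulg1 => E.
by rewrite -E fK.
Qed.

Lemma fV x : f x^-1 = ginv (f x).
Proof.
have := fM (g (ginv (f x))) x; rewrite fK gmulV -f1 => /f_inj E.
by rewrite -[RHS]fK -[g _]mulg1 -(mulgV x) mulgA E mul1g.
Qed.

Lemma fX x n : gpow (f x) n = f (x ^+ n).
Proof.
elim: n => [|n IH]; first by rewrite expg0 f1.
by rewrite expgS fM -IH.
Qed.

Lemma f_eq x y : f x = f y <-> x = y.
Proof. by split=> [/f_inj|->]. Qed.

Lemma fX1 x n : gpow (f x) n = gone G <-> x ^+ n = 1.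
Proof. by rewrite fX -f1 f_eq. Qed.

Lemma inpow_f u v : inpow (f u) (f v) <-> inpowT u v.
Proof.
by rewrite /inpow /inpowT -f1 !fX !f_eq.
Qed.

Lemma theta_f (zG : 'I_3 -> G) (z : 'I_3 -> gT) :
  (forall i, zG i = f (z i)) -> (theta zG <-> thetaT z).
Proof.
move=> Hz; rewrite /theta /thetaT.
setoid_rewrite Hz; setoid_rewrite <- fM; setoid_rewrite inpow_f.
by [].
Qed.

Lemma dId2_f : dId2 G <-> tI2 gT.
Proof.
rewrite /dId2 /tI2; split=> H x1 x2.
  by move: (H (f x1) (f x2)); rewrite [gpow (f x2) 2]fX -!fM !fX1.
by rewrite -(fK x1) -(fK x2) [gpow (f (g x2)) 2]fX -!fM !fX1.
Qed.

Lemma dId3_f : dId3 G <-> tI3 gT.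
Proof.
rewrite /dId3 /tI3; split=> H x.
  by move: (H (f x)); rewrite !fX1.
by rewrite -(fK x) !fX1.
Qed.

Lemma dId4_f : dId4 G <-> tI4 gT.
Proof.
rewrite /dId4 /tI4; split=> H x1 x2.
  by move: (H (f x1) (f x2)); rewrite -fM -f1 !fX !f_eq.
by rewrite -(fK x1) -(fK x2) -fM -f1 !fX !f_eq.
Qed.

Lemma z3_f x1 x2 x3 i : (z3 (f x1) (f x2) (f x3)) i = f (z3 x1 x2 x3 i).
Proof. by rewrite !ffunE; case: ifP => _ //; case: ifP. Qed.

Lemma dId5_f : dId5 G <-> tI5 gT.
Proof.
rewrite /dId5 /tI5; split=> H x1 x2 x3.
  move: (H (f x1) (f x2) (f x3)).
  by rewrite -!fV -!fM !fX1 (theta_f (z3_f x1 x2 x3)).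
rewrite -(fK x1) -(fK x2) -(fK x3).
rewrite -!fV -!fM !fX1.
have -> := theta_f (z3_f (g x1) (g x2) (g x3)).
exact: H.
Qed.

Lemma dId1_f : dId1 G <-> tI1 gT.
Proof.
rewrite /dId1 /tI1; split=> H.
  rewrite leqNgt; apply/negP => Hc.
  have [i [j [Hij E]]] := H (fun i => f (enum_val (widen_ord Hc i))).
  move/f_inj/enum_val_inj/(congr1 val): E => /= E.
  by rewrite E ltnn in Hij.
move=> x; apply: NNPP => Hn.
have inj : injective (fun i => g (x i)).
  move=> i j /(congr1 f); rewrite !fK => E.
  case: (ltngtP i j) => [lt|lt|/val_inj //].
    by case: Hn; exists i, j.
  by case: Hn; exists j, i.
by have := leq_card _ inj; rewrite card_ord leqNgt ltnS H.
Qed.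

End Transport.

End MA.
Import MA.

Module MB.
Local Open Scope group_scope.

Definition code := seq nat.
Definition cm (a b : code) : code := [seq nth 0 b (nth 0 a i) | i <- iota 0 4].
Definition ce : code := iota 0 4.
Definition cp (a : code) n := iter n (cm a) ce.
Definition cL := permutations (iota 0 4).

Definition cS (s : S4) : code := [seq val (s i) | i <- enum 'I_4].

Lemma cS_nth (s : S4) (i : 'I_4) : nth 0 (cS s) i = val (s i).
Proof.
by rewrite /cS (nth_map ord0) ?size_enum_ord ?ltn_ord // nth_ord_enum.
Qed.

Lemma cS_mul (s t : S4) : cS (s * t)%g = cm (cS s) (cS t).
Proof.
rewrite /cm -val_enum_ord -map_comp /cS; apply: eq_map => i /=.
by rewrite permM -cS_nth -cS_nth.
Qed.

Lemma cS_one : cS 1%g = ce.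
Proof. by rewrite /cS /ce -val_enum_ord; apply: eq_map => i; rewrite perm1. Qed.

Lemma cS_pow (s : S4) n : cS (s ^+ n)%g = cp (cS s) n.
Proof. by elim: n => [|n IH]; rewrite ?expg0 ?cS_one // expgS cS_mul IH. Qed.

Lemma cS_inj : injective cS.
Proof.
move=> s t E; apply/permP => i; apply: val_inj.
by rewrite -!cS_nth E.
Qed.

Lemma cS_in (s : S4) : cS s \in cL.
Proof.
rewrite mem_permutations /cS -val_enum_ord (map_comp val) perm_map //.
apply: uniq_perm; rewrite ?enum_uniq ?(map_inj_uniq (@perm_inj _ s)) ?enum_uniq //.
move=> x; rewrite mem_enum; apply/mapP; exists (s^-1 x)%g; rewrite ?mem_enum //.
by rewrite permKV.
Qed.

Lemma S4_exp24 (x : S4) : (x ^+ 24 = 1)%g.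
Proof.
apply/eqP; rewrite -order_dvdn.
by have := order_dvdG (in_setT x); rewrite cardsT card_Sn.
Qed.

Lemma S4_inv (x : S4) : (x^-1 = x ^+ 23)%g.
Proof. by rewrite -[(x ^+ 23)%g](mulKg x) -expgS S4_exp24 mulg1. Qed.

Definition ipw (u v : code) := [|| u == ce, u == v, u == cp v 2 | u == cp v 3].
Definition thb (a b c : code) :=
 [|| ipw a b, ipw a c, ipw b a, ipw b c, ipw c a, ipw c b,
     ipw a (cm b c), ipw a (cm c b), ipw b (cm a c), ipw b (cm c a), ipw c (cm a b), ipw c (cm b a),
     ipw (cm a b) (cm b c), ipw (cm a c) (cm c b), ipw (cm b a) (cm a c), ipw (cm b c) (cm c a),
     ipw (cm c a) (cm a b) | ipw (cm c b) (cm b a)].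
Definition b5 a b c := [|| cp a 3 == ce, cp b 3 == ce, cp c 3 == ce, cp (cm (cp a 23) b) 3 == ce,
  cp (cm (cp a 23) c) 3 == ce, cp (cm (cp b 23) c) 3 == ce | thb a b c].
Definition b2 a b := [|| cp a 4 == ce, cp b 4 == ce, cp (cm a b) 4 == ce | cp (cm a (cp b 2)) 4 == ce].
Definition b3 a := (cp a 3 == ce) || (cp a 4 == ce).
Definition b4 a b := [|| cp a 6 == ce, cp b 6 == ce, a == b, cm a b == ce | cp (cm a b) 3 == ce].

Lemma all5 : all (fun a => all (fun b => all (fun c => b5 a b c) cL) cL) cL.
Proof. vm_compute. reflexivity. Qed.
Lemma all2 : all (fun a => all (fun b => b2 a b) cL) cL.
Proof. vm_compute. reflexivity. Qed.
Lemma all3 : all b3 cL.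
Proof. vm_compute. reflexivity. Qed.
Lemma all4 : all (fun a => all (fun b => b4 a b) cL) cL.
Proof. vm_compute. reflexivity. Qed.

Section GenB.
Variable gT : finGroupType.
Definition ipwB (u v : gT) := [|| u == 1, u == v, u == v ^+ 2 | u == v ^+ 3].
Definition thB (a b c : gT) :=
 [|| ipwB a b, ipwB a c, ipwB b a, ipwB b c, ipwB c a, ipwB c b,
     ipwB a (b * c), ipwB a (c * b), ipwB b (a * c), ipwB b (c * a), ipwB c (a * b), ipwB c (b * a),
     ipwB (a * b) (b * c), ipwB (a * c) (c * b), ipwB (b * a) (a * c), ipwB (b * c) (c * a),
     ipwB (c * a) (a * b) | ipwB (c * b) (b * a)].

Lemma ipwBP u v : ipwB u v -> inpowT u v.
Proof. by rewrite /inpowT; case/or4P => /eqP ->; auto. Qed.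

Notation o0 := (@Ordinal 3 0 isT).
Notation o1 := (@Ordinal 3 1 isT).
Notation o2 := (@Ordinal 3 2 isT).

Lemma thB_theta a b c : thB a b c -> thetaT (z3 a b c).
Proof.
have E0 : z3 a b c o0 = a by rewrite ffunE.
have E1 : z3 a b c o1 = b by rewrite ffunE.
have E2 : z3 a b c o2 = c by rewrite ffunE.
rewrite /thetaT.
move=> H; rewrite /thB in H.
repeat match type of H with
| is_true (?P || ?Q) => case/orP: H => H; last first
end;
have {}H := ipwBP H;
first [ (left; exists o0, o1; rewrite ?E0 ?E1 ?E2; split; [by [] | exact H])
 | (left; exists o0, o2; rewrite ?E0 ?E1 ?E2; split; [by [] | exact H])
 | (left; exists o1, o0; rewrite ?E0 ?E1 ?E2; split; [by [] | exact H])
 | (left; exists o1, o2; rewrite ?E0 ?E1 ?E2; split; [by [] | exact H])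
 | (left; exists o2, o0; rewrite ?E0 ?E1 ?E2; split; [by [] | exact H])
 | (left; exists o2, o1; rewrite ?E0 ?E1 ?E2; split; [by [] | exact H])
 | (right; left; exists o0, o1, o2; rewrite ?E0 ?E1 ?E2; split; [by [] | exact H])
 | (right; right; exists o0, o1, o2; rewrite ?E0 ?E1 ?E2; split; [by [] | exact H])
 | (right; left; exists o0, o2, o1; rewrite ?E0 ?E1 ?E2; split; [by [] | exact H])
 | (right; right; exists o0, o2, o1; rewrite ?E0 ?E1 ?E2; split; [by [] | exact H])
 | (right; left; exists o1, o0, o2; rewrite ?E0 ?E1 ?E2; split; [by [] | exact H])
 | (right; right; exists o1, o0, o2; rewrite ?E0 ?E1 ?E2; split; [by [] | exact H])
 | (right; left; exists o1, o2, o0; rewrite ?E0 ?E1 ?E2; split; [by [] | exact H])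
 | (right; right; exists o1, o2, o0; rewrite ?E0 ?E1 ?E2; split; [by [] | exact H])
 | (right; left; exists o2, o0, o1; rewrite ?E0 ?E1 ?E2; split; [by [] | exact H])
 | (right; right; exists o2, o0, o1; rewrite ?E0 ?E1 ?E2; split; [by [] | exact H])
 | (right; left; exists o2, o1, o0; rewrite ?E0 ?E1 ?E2; split; [by [] | exact H])
 | (right; right; exists o2, o1, o0; rewrite ?E0 ?E1 ?E2; split; [by [] | exact H]) ].
Qed.
End GenB.

Ltac cSrw H := rewrite /b2 /b3 /b4 /b5 /thb /ipw in H;
  repeat (rewrite -?cS_pow -?cS_mul in H);
  rewrite -?S4_inv -?cS_one ?(inj_eq cS_inj) in H.
Ltac dis H := repeat (case/orP: H => [/eqP H|H]; [tauto|]); move/eqP: H => H; tauto.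

Lemma S4_tI2 : tI2 S4.
Proof.
move=> x1 x2; have H := allP (allP all2 _ (cS_in x1)) _ (cS_in x2).
cSrw H; dis H.
Qed.

Lemma S4_tI3 : tI3 S4.
Proof.
move=> x; have H := allP all3 _ (cS_in x).
cSrw H; dis H.
Qed.

Lemma S4_tI4 : tI4 S4.
Proof.
move=> x1 x2; have H := allP (allP all4 _ (cS_in x1)) _ (cS_in x2).
cSrw H; dis H.
Qed.

Lemma thb_cS a b c : thb (cS a) (cS b) (cS c) = thB a b c.
Proof.
rewrite /thb /thB /ipw /ipwB.
by repeat (rewrite -?cS_pow -?cS_mul); rewrite -?cS_one ?(inj_eq cS_inj).
Qed.

Lemma S4_tI5 : tI5 S4.
Proof.
move=> x1 x2 x3.
have H := allP (allP (allP all5 _ (cS_in x1)) _ (cS_in x2)) _ (cS_in x3).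
rewrite /b5 thb_cS in H.
repeat (rewrite -?cS_pow -?cS_mul in H).
rewrite -?S4_inv -?cS_one ?(inj_eq cS_inj) in H.
repeat (case/orP: H => [/eqP H|H]; [tauto|]).
by do 6 right; apply: thB_theta.
Qed.

Lemma part1 : satisfies_basis (fin_group S4).
Proof.
have fM : forall x y : S4, @id S4 (x * y) = @gmul (fin_group S4) (@id S4 x) (@id S4 y) by [].
split.
- apply/(@dId1_f (fin_group S4) S4 id id (fun x => erefl) (fun x => erefl)); by rewrite /tI1 card_Sn.
- exact (proj2 (@dId2_f (fin_group S4) S4 id id fM (fun x => erefl) (fun x => erefl)) S4_tI2).
- exact (proj2 (@dId3_f (fin_group S4) S4 id id fM (fun x => erefl) (fun x => erefl)) S4_tI3).
- exact (proj2 (@dId4_f (fin_group S4) S4 id id fM (fun x => erefl) (fun x => erefl)) S4_tI4).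
- exact (proj2 (@dId5_f (fin_group S4) S4 id id fM (fun x => erefl) (fun x => erefl)) S4_tI5).
Qed.

End MB.
Import MB.

Module MC.
Local Open Scope group_scope.

Record gtable := GTable {
  gt_n : nat;
  gt_mul : 'I_gt_n -> 'I_gt_n -> 'I_gt_n;
  gt_one : 'I_gt_n;
  gt_inv : 'I_gt_n -> 'I_gt_n;
  gt_mulA : associative gt_mul;
  gt_mul1 : left_id gt_one gt_mul;
  gt_mulV : left_inverse gt_one gt_inv gt_mul }.

Definition gtT (t : gtable) : Type := 'I_(gt_n t).
HB.instance Definition _ t := Finite.on (gtT t).
HB.instance Definition _ t := Finite_isGroup.Build (gtT t) (@gt_mulA t) (@gt_mul1 t) (@gt_mulV t).



Section Build.
Variable G : absgroup.
Hypothesis H1 : dId1 G.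

Definition injP n := exists e : 'I_n -> G, injective e.

Lemma not_inj25 : ~ injP 25.
Proof.
case=> e inj; have [i [j [lt E]]] := H1 e.
by move/inj: E => E; rewrite E ltnn in lt.
Qed.

Lemma max_inj : exists n, injP n /\ ~ injP n.+1.
Proof.
suff: forall m k, k + m = 25 -> injP k -> exists n, injP n /\ ~ injP n.+1.
  move=> H; apply: (H 25 0) => //.
  have f0 : 'I_0 -> G by case=> m; rewrite ltn0.
  by exists f0; case=> m p; exfalso; rewrite ltn0 in p.
elim=> [|m IH] k Hk Pk.
  by rewrite addn0 in Hk; subst k; case: not_inj25.
case: (classic (injP k.+1)) => [Pk1|nPk1].
  by apply: (IH k.+1) => //; rewrite addSn -addnS.
by exists k.
Qed.

Lemma bij_exists : exists n (e : 'I_n -> G), injective e /\ forall y, exists i, e i = y.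
Proof.
have [n [[e inj] nP]] := max_inj.
exists n, e; split => // y; apply: NNPP => Hy.
apply: nP.
exists (fun i : 'I_n.+1 => if unlift ord_max i is Some j then e j else y).
move=> i j; case: (unliftP ord_max i) => [i'|] ->; case: (unliftP ord_max j) => [j'|] -> //.
- by move/inj ->.
- by move=> E; case: Hy; exists i'.
- by move=> E; case: Hy; exists j'.
Qed.

Lemma build : exists t : gtable, exists (f : gtT t -> G) (g : G -> gtT t),
  [/\ forall x y, f (x * y)%g = gmul (f x) (f y), cancel g f & cancel f g].
Proof.
have [n [e [inj surj]]] := bij_exists.
pose g y := proj1_sig (constructive_indefinite_description _ (surj y)).
have ge : cancel g e by move=> y; rewrite /g; case: constructive_indefinite_description.
have eg : cancel e g by move=> i; apply: inj; rewrite ge.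
pose mul i j := g (gmul (e i) (e j)).
pose one := g (gone G).
pose inv i := g (ginv (e i)).
have mA : associative mul by move=> i j k; rewrite /mul !ge gmulA.
have m1 : left_id one mul by move=> i; rewrite /mul /one ge gmul1 eg.
have mV : left_inverse one inv mul by move=> i; rewrite /mul /one /inv ge gmulV.
exists (GTable mA m1 mV), e, g; split => //.
by move=> x y; rewrite /= /mul ge.
Qed.
End Build.

End MC.
Import MC.

Module MD.
Local Open Scope group_scope.

Lemma small_n_check : all (fun n => ~~ all (fun p => prime p ==> (p %| n) ==> (p <= 3)) (iota 0 25)
   || (n \in [:: 1; 2; 3; 4; 6; 8; 9; 12; 16; 18; 24]))%N (iota 1 24).
Proof. vm_compute. reflexivity. Qed.

Lemma div_check16 : all (fun d => (d %| 16) ==> (12 <= d) ==> (d == 16))%N (iota 0 17).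
Proof. vm_compute. reflexivity. Qed.

Lemma div_check3 : all (fun d => all (fun n => (n \in [:: 12; 24]) ==> (d %| n) ==> (3 %| d) ==> ~~ (2 %| d) ==> (d == 3)) [:: 12; 24])%N (iota 0 25).
Proof. vm_compute. reflexivity. Qed.

Lemma syl_check : all (fun d => (d %| 24) ==> (d %% 3 == 1) ==> ((d == 1) || (d == 4)))%N (iota 0 25).
Proof. vm_compute. reflexivity. Qed.

Lemma six_check : all (fun d => (d %| 6) ==> (d != 1) ==> ~~ (3 %| d) ==> (d == 2))%N (iota 0 7).
Proof. vm_compute. reflexivity. Qed.

Section NoTheta.
Variable gT : finGroupType.

Lemma sq_inv (x : gT) : x ^+ 2 = 1 -> x^-1 = x.
Proof. by move=> E; rewrite -[RHS](mulKg x) -expg2 E mulg1. Qed.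

Lemma noTheta (z : 'I_3 -> gT) :
  (forall i, z i ^+ 2 = 1) -> (forall i, z i != 1) ->
  (forall i j, i != j -> z i != z j) -> (forall i j, commute (z i) (z j)) ->
  (forall i j k, i != j -> j != k -> i != k -> z i != z j * z k) ->
  ~ thetaT z.
Proof.
move=> zi2 zi1 zinj zc z3c.
have p3 : forall x : gT, x ^+ 2 = 1 -> x ^+ 3 = x by move=> x E; rewrite expgS E mulg1.
have v2 : forall j k, (z j * z k) ^+ 2 = 1 by move=> j k; rewrite expgMn // !zi2 mulg1.
case => [[i [j [ij H]]] | [[i [j [k [[ij jk ik] H]]]] | [i [j [k [[ij jk ik] H]]]]]].
- case: H => [E|[E|[E|E]]].
  + by move/eqP: (zi1 i).
  + by move/eqP: (zinj _ _ ij).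
  + by move/eqP: (zi1 i); rewrite zi2 in E.
  + by move/eqP: (zinj _ _ ij); rewrite p3 in E.
- case: H => [E|[E|[E|E]]].
  + by move/eqP: (zi1 i).
  + by move/eqP: (z3c _ _ _ ij jk ik).
  + by move/eqP: (zi1 i); rewrite v2 in E.
  + by move/eqP: (z3c _ _ _ ij jk ik); rewrite p3 in E.
- have U1 : z i * z j = 1 -> False.
    move=> E; move/eqP: (zinj _ _ ij); apply.
    by rewrite -[z i]mulg1 -(zi2 j) expgS mulgA E mul1g expg1.
  have U2 : z i * z j = z j * z k -> False.
    rewrite (zc j k) => /mulIg E.
    by move/eqP: (zinj _ _ ik).
  case: H => [E|[E|[E|E]]].
  + exact: U1.
  + exact: U2.
  + by apply: U1; rewrite E v2.
  + by apply: U2; rewrite E p3.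
Qed.
End NoTheta.

Section Classif.
Variable gT : finGroupType.
Hypotheses (h1 : tI1 gT) (h2 : tI2 gT) (h3 : tI3 gT) (h4 : tI4 gT) (h5 : tI5 gT).
Local Notation G := [set: gT]%G.
Local Notation n := #|gT|.

Lemma cardG : #|G| = n. Proof. by rewrite cardsT. Qed.

Lemma ord_dvd (x : gT) : (#[x] %| 3)%N \/ (#[x] %| 4)%N.
Proof. by case: (h3 x) => /eqP; rewrite -order_dvdn; auto. Qed.

Lemma p_small p : prime p -> (p %| n)%N -> (p <= 3)%N.
Proof.
move=> pr dv; have dvG : (p %| #|G|)%N by rewrite cardG.
have [x _ ox] := Cauchy pr dvG.
case: (ord_dvd x); rewrite ox => /dvdn_leq; first by apply.
move=> /(_ isT) le4.
have : p != 4%N by apply: contraTneq pr => ->.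
by rewrite leq_eqVlt in le4; case/orP: le4 => [->|] //; rewrite ltnS.
Qed.

Lemma n_cases : n \in [:: 1; 2; 3; 4; 6; 8; 9; 12; 16; 18; 24]%N.
Proof.
have n0 : (0 < n)%N by apply/card_gt0P; exists 1.
have : (n \in iota 1 24) by rewrite mem_iota n0 /= add1n ltnS.
move/(allP small_n_check) => /orP [] //.
case/allPn => p _; rewrite !negb_imply => /and3P [pr dv].
by rewrite p_small.
Qed.

Lemma pow1P (x : gT) k : x ^+ k = 1 <-> (#[x] %| k)%N.
Proof. by rewrite order_dvdn; split => [->|/eqP]. Qed.

Lemma order2P (x : gT) : #[x] = 2 <-> x ^+ 2 = 1 /\ x != 1.
Proof.
rewrite pow1P -order_gt1; split=> [->//|[dv gt1]].
apply/eqP; rewrite eqn_leq dvdn_leq //.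
Qed.

Lemma cyc_prime_elt (b x : gT) : prime #[b] -> x \in <[b]> -> x != 1 -> <[x]> = <[b]>.
Proof.
move=> pr xb x1; apply/eqP; rewrite eqEcard cycle_subG xb /=.
have dv : (#[x] %| #[b])%N by apply: cardSg; rewrite cycle_subG.
have x1' : #[x] != 1%N by rewrite order_eq1.
change (#[b] <= #[x])%N.
by rewrite (prime_nt_dvdP pr x1' dv).
Qed.

Lemma cyc2 (b x : gT) : #[b] = 2 -> x \in <[b]> -> x != 1 -> x = b.
Proof.
move=> ob xb x1.
case/cycleP: xb x1 => i ->; rewrite -expg_mod_order ob.
have : (i %% 2 < 2)%N by rewrite ltn_mod.
case: (i %% 2)%N => [|[|//]] _; first by rewrite expg0 eqxx.
by rewrite expg1.
Qed.

Lemma Lc (b c : gT) : #[b] = 2 -> #[c] = 3 -> commute b c -> False.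
Proof.
move=> ob oc cbc.
case: (h3 (b * c)); rewrite expgMn // => /eqP.
  have -> : c ^+ 3 = 1 by apply/pow1P; rewrite oc.
  by rewrite mulg1 -order_dvdn ob.
have -> : b ^+ 4 = 1 by apply/pow1P; rewrite ob.
by rewrite mul1g -order_dvdn oc.
Qed.

Lemma core_prime (x : gT) : prime #[x] -> gcore <[x]> G != 1 ->
  forall y, x ^ y \in <[x]>.
Proof.
move=> pr K1 y.
set K := gcore <[x]> G.
have sK : K \subset <[x]> by exact: gcore_sub.
have eK : K = <[x]>.
  apply/eqP; rewrite eqEcard sK /=.
  have := cardSg sK; rewrite -orderE.
  rewrite trivg_card1 in K1.
  by move/(prime_nt_dvdP pr K1) ->.
have xK : x \in K by rewrite eK cycle_id.
have nK : y \in 'N(K) by apply: (subsetP (gcore_norm _ _)); rewrite inE.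
by rewrite -eK memJ_norm.
Qed.

Lemma core_inv (b : gT) : #[b] = 2 -> gcore <[b]> G != 1 -> forall y, commute b y.
Proof.
move=> ob K1 y.
have pr : prime #[b] by rewrite ob.
have E : b ^ y = b.
  by apply: cyc2 (core_prime pr K1 y) _ => //; rewrite conjg_eq1 -order_eq1 ob.
by rewrite /commute -{2}E conjgE mulKVg.
Qed.

Definition goodH := exists H : {group gT}, (#|G : H| <= 4)%N /\ gcore H G = 1.

Lemma case_small : (n <= 4)%N -> goodH.
Proof.
move=> le4; exists 1%G; split; first by rewrite indexg1 cardG.
apply/trivgP; exact: gcore_sub.
Qed.

Lemma idx_cyc (x : gT) : #|G : <[x]>| = (n %/ #[x])%N.
Proof. by rewrite -divgS ?subsetT // cardG. Qed.

Lemma elt_of p : prime p -> (p %| n)%N -> exists x : gT, #[x] = p.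
Proof.
move=> pr dv; have dvG : (p %| #|G|)%N by rewrite cardG.
by have [x _ ox] := Cauchy pr dvG; exists x.
Qed.

Lemma case6 : n = 6%N -> goodH.
Proof.
move=> n6.
have d2 : (2 %| n)%N by rewrite n6.
have d3 : (3 %| n)%N by rewrite n6.
have [b ob] := elt_of (isT : prime 2) d2.
have [c oc] := elt_of (isT : prime 3) d3.
exists <[b]>%G; split; first by rewrite idx_cyc n6 ob.
apply/eqP; apply: contraT => K1.
by case: (Lc ob oc (core_inv ob K1 c)).
Qed.

Lemma centE (c : gT) : n \in [:: 12; 24]%N -> #[c] = 3 -> #|'C[c]| = 3%N.
Proof.
move=> nin oc.
have d3 : (3 %| #|'C[c]|)%N.
  by rewrite -oc; apply: cardSg; rewrite cycle_subG cent1id.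
have d2 : ~~ (2 %| #|'C[c]|)%N.
  apply/negP => /(Cauchy (isT : prime 2)) [b Cb ob].
  by apply: (Lc ob oc); apply/cent1P.
have dn : (#|'C[c]| %| n)%N by rewrite -cardG; apply: cardSg; exact: subsetT.
have le : (#|'C[c]| < 25)%N.
  rewrite ltnS; apply: leq_trans (dvdn_leq _ dn) h1.
  by apply/card_gt0P; exists 1.
have mi : #|'C[c]| \in iota 0 25 by rewrite mem_iota le.
have := allP div_check3 _ mi.
move/allP => /(_ n nin); rewrite nin dn d3 d2 /=.
by move/eqP.
Qed.

Lemma classE (c : gT) : n \in [:: 12; 24]%N -> #[c] = 3 -> (#|c ^: G| * 3)%N = n.
Proof.
move=> nin oc; rewrite -index_cent1 setTI -(centE nin oc) mulnC.
by rewrite Lagrange ?subsetT // cardG.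
Qed.

Lemma case12 : n = 12%N -> goodH.
Proof.
move=> n12.
have d3 : (3 %| n)%N by rewrite n12.
have [c oc] := elt_of (isT : prime 3) d3.
exists <[c]>%G; split; first by rewrite idx_cyc n12 oc.
apply/eqP; apply: contraT => K1.
have pr : prime #[c] by rewrite oc.
have sub : c ^: G \subset <[c]>.
  by apply/subsetP => y /imsetP [z _ ->]; exact: core_prime.
have := subset_leq_card sub; rewrite -orderE oc.
have nin : n \in [:: 12; 24]%N by rewrite n12.
have := classE nin oc; rewrite n12.
by move=> E; rewrite leqNgt -(ltn_pmul2r (isT : (0 < 3)%N)) E.
Qed.

Lemma case24 : n = 24%N -> goodH.
Proof.
move=> n24.
have [P sP] := Sylow_exists 3 G.
have cP : #|P| = 3%N by rewrite (card_Hall sP) cardG n24 p_part; vm_compute.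
have d3P : (3 %| #|P|)%N by rewrite cP.
have [c cP' oc] := Cauchy (isT : prime 3) d3P.
have nin : n \in [:: 12; 24]%N by rewrite n24.
have cl8 : #|c ^: G| = 8%N.
  by apply/eqP; rewrite -(eqn_pmul2r (isT : (0 < 3)%N)) classE // n24.
have eP : <[c]> = P.
  apply/eqP; rewrite eqEcard cycle_subG cP' /= cP -orderE oc //.
have nS := card_Syl sP.
have nSd : (#|'Syl_3(G)| %| 24)%N by rewrite -n24 -cardG card_Syl_dvd.
have nSm := card_Syl_mod G (isT : prime 3).
have nSl : (#|'Syl_3(G)| < 25)%N by rewrite ltnS dvdn_leq.
have mi : #|'Syl_3(G)| \in iota 0 25 by rewrite mem_iota nSl.
have := allP syl_check _ mi; rewrite nSd nSm /= => /orP [] /eqP E.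
  exfalso.
  have : G \subset 'N_G(P) by rewrite -indexg_eq1 -nS E.
  rewrite subsetI subxx /= => nP.
  have sub : c ^: G \subset P.
    by rewrite class_sub_norm.
  by have := subset_leq_card sub; rewrite cl8 cP.
exists 'N_G(P)%G; split; first by rewrite -nS E.
set H := 'N_G(P).
have cH : (#|H| * 4)%N = 24%N.
  have L : (#|H| * #|G : H|)%N = 24%N by rewrite Lagrange ?subsetT // cardG n24.
  by rewrite -[in RHS]L -nS E.
have cH6 : #|H| = 6%N by apply/eqP; rewrite -(eqn_pmul2r (isT : (0 < 4)%N)) cH.
set K := gcore H G.
have nK : G \subset 'N(K) by exact: gcore_norm.
have dK : (#|K| %| 6)%N by rewrite -cH6; apply: cardSg; exact: gcore_sub.
apply/eqP; rewrite trivg_card1; apply: contraT => K1.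
case: (boolP (3 %| #|K|)%N) => d3.
  have [c' c'K oc'] := Cauchy (isT : prime 3) d3.
  have sub : c' ^: G \subset K by rewrite class_sub_norm.
  have cl8' : #|c' ^: G| = 8%N.
    by apply/eqP; rewrite -(eqn_pmul2r (isT : (0 < 3)%N)) classE // n24.
  have := subset_leq_card sub; rewrite cl8'.
  by rewrite leqNgt ltnS (leq_trans (dvdn_leq _ dK)).
have K2 : #|K| = 2%N.
  have mi7 : #|K| \in iota 0 7 by rewrite mem_iota add0n ltnS (dvdn_leq _ dK).
  by have := allP six_check _ mi7; rewrite dK K1 d3 => /eqP.
have d2 : (2 %| #|K|)%N by rewrite K2.
have [b bK ob] := Cauchy (isT : prime 2) d2.
have eK : <[b]> = K.
  apply/eqP; rewrite eqEcard cycle_subG bK /= K2 -orderE ob //.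
have E2 : b ^ c = b.
  apply: cyc2 => //; last by rewrite conjg_eq1 -order_eq1 ob.
  by rewrite eK memJ_norm // (subsetP nK) ?inE.
have cm : commute b c by rewrite /commute -{2}E2 conjgE mulKVg.
by case: (Lc ob oc cm).
Qed.

Lemma pick_out (A B : {set gT}) : (#|B| < #|A|)%N -> exists2 x, x \in A & x \notin B.
Proof.
move=> lt; apply/subsetPn; apply: contraTN lt => sub.
by rewrite -leqNgt subset_leq_card.
Qed.

Lemma cardU_le (A B : {set gT}) : (#|A :|: B| <= #|A| + #|B|)%N.
Proof. by rewrite -cardsUI leq_addr. Qed.

Lemma card2 (a b : gT) : (#|[set a; b]| <= 2)%N.
Proof. by rewrite cards2; case: (a != b). Qed.

Lemma card4 (a b c d : gT) : (#|[set a; b; c; d]| <= 4)%N.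
Proof.
apply: leq_trans (cardU_le _ _) _; rewrite cards1 addn1 ltnS.
apply: leq_trans (cardU_le _ _) _; rewrite cards1 addn1 ltnS.
exact: card2.
Qed.

Section TwoGroup.
Hypothesis n2 : n = 8%N \/ n = 16%N.

Lemma L2a (x : gT) : x ^+ 3 = 1 -> x = 1.
Proof.
move/pow1P => d3; apply/eqP; rewrite -order_eq1.
have dn : (#[x] %| n)%N by rewrite -cardG; apply: order_dvdG; rewrite inE.
have : (#[x] %| gcdn 3 n)%N by rewrite dvdn_gcd d3 dn.
by case: n2 => ->; rewrite dvdn1.
Qed.

Lemma L2b (x : gT) : x ^+ 4 = 1.
Proof. by case: (h3 x) => // /L2a ->; rewrite expg1n. Qed.

Lemma L2c (x : gT) : x ^+ 6 = x ^+ 2.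
Proof. by rewrite (expgnDr x 2 4) L2b mulg1. Qed.

Lemma L2d (a y : gT) : a ^+ 2 != 1 -> y ^+ 2 != 1 -> y = a \/ y = a^-1.
Proof.
move=> a2 y2.
case: (h4 a y) => [|[|[|[|]]]].
- by rewrite L2c => E; rewrite E eqxx in a2.
- by rewrite L2c => E; rewrite E eqxx in y2.
- by left.
- by move=> E; right; rewrite -[y](mulKg a) E mulg1.
- by move/L2a => E; right; rewrite -[y](mulKg a) E mulg1.
Qed.

Definition Iset := [set x : gT | x ^+ 2 == 1].

Lemma L2e : exists a : gT, ~: Iset \subset [set a; a^-1].
Proof.
case: (set_0Vmem (~: Iset)) => [E|[a aI]].
  by exists 1; rewrite E sub0set.
exists a; apply/subsetP => y yI.
move: aI yI; rewrite !inE => a2 y2.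
by case: (L2d a2 y2) => ->; rewrite eqxx ?orbT.
Qed.

Lemma L2f : (n - 2 <= #|Iset|)%N.
Proof.
have [a sub] := L2e.
have := cardsC Iset; have := subset_leq_card sub; have := card2 a a^-1.
move=> c2 c1 E; rewrite -E.
rewrite leq_subLR addnC leq_add2r.
exact: leq_trans c1 c2.
Qed.

Lemma L2g : exists b : gT, [/\ b ^+ 2 = 1, b != 1 & exists y, ~ commute b y].
Proof.
apply: NNPP => Hn.
have cent : forall b y : gT, b ^+ 2 = 1 -> commute b y.
  move=> b y b2; case: (eqVneq b 1) => [->|b1]; first exact: commute_sym (commute1 y).
  apply: NNPP => nc; apply: Hn; exists b; split => //; by exists y.
have cI : (6 <= #|Iset|)%N by apply: leq_trans L2f; case: n2 => ->.
have [x1 x1I x1n] : exists2 x, x \in Iset & x \notin [set 1].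
  by apply: pick_out; rewrite cards1; apply: leq_trans cI.
have [x2 x2I x2n] : exists2 x, x \in Iset & x \notin [set 1; x1].
  by apply: pick_out; apply: leq_ltn_trans (card2 _ _) _; apply: leq_trans cI.
have [x3 x3I x3n] : exists2 x, x \in Iset & x \notin [set 1; x1; x2; x1 * x2].
  by apply: pick_out; apply: leq_ltn_trans (card4 _ _ _ _) _; apply: leq_trans cI.
move: x1I x2I x3I x1n x2n x3n; rewrite !inE !negb_or => /eqP i1 /eqP i2 /eqP i3.
move=> n1 /andP [n21 n22] /andP [/andP [/andP [n31 n32] n33] n34].
have eqV1 : forall x y : gT, x^-1 * y = 1 -> y = x.
  by move=> x y E; rewrite -[y](mulKVg x) E mulg1.
have R1 : forall u v w : gT, v ^+ 2 = 1 -> u = v * w -> w = v * u.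
  by move=> u v w v2 ->; rewrite mulgA -expg2 v2 mul1g.
have R2 : forall u v w : gT, w ^+ 2 = 1 -> u = v * w -> v = u * w.
  by move=> u v w w2 ->; rewrite -mulgA -expg2 w2 mulg1.
have c12 : commute x1 x2 by apply: cent.
case: (h5 x1 x2 x3) => [/L2a E|[/L2a E|[/L2a E|[/L2a/eqV1 E|[/L2a/eqV1 E|[/L2a/eqV1 E|E]]]]]].
- by rewrite E eqxx in n1.
- by rewrite E eqxx in n21.
- by rewrite E eqxx in n31.
- by rewrite E eqxx in n22.
- by rewrite E eqxx in n32.
- by rewrite E eqxx in n33.
move: E; apply: noTheta.
- by case=> [[|[|[|//]]] ?]; rewrite ffunE.
- by case=> [[|[|[|//]]] ?]; rewrite ffunE.
- case=> [[|[|[|//]]] ?] [[|[|[|//]]] ?] //= _; rewrite !ffunE /=; first [ done | by rewrite eq_sym ].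
- by move=> i j; apply: cent; case: i => [[|[|[|//]]] ?]; rewrite ffunE.
- case=> [[|[|[|//]]] ?] [[|[|[|//]]] ?] [[|[|[|//]]] ?] //= _ _ _; rewrite !ffunE /=;
  apply/eqP => E; move/eqP: n34; apply;
  first [ exact E | by rewrite E c12 | by rewrite (R1 _ _ _ _ E) ?c12 | by rewrite (R2 _ _ _ _ E) ?c12 ].
Qed.

Lemma case8 : n = 8%N -> goodH.
Proof.
move=> n8; have [b [b2 b1 [y ncb]]] := L2g.
have ob : #[b] = 2 by apply/order2P.
exists <[b]>%G; split; first by rewrite idx_cyc n8 ob.
apply/eqP; apply: contraT => K1.
by case: ncb; apply: core_inv.
Qed.

Lemma case16 : n = 16%N -> False.
Proof.
move=> n16; have [b [b2 b1 [y ncb]]] := L2g.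
have [a sub] := L2e.
pose S := [set y : gT | (y ^+ 2 == 1) && ((b * y) ^+ 2 == 1)].
have SC : S \subset 'C[b].
  apply/subsetP => z; rewrite inE => /andP [/eqP z2 /eqP bz2].
  apply/cent1P; rewrite /commute.
  have := sq_inv bz2; rewrite invMg (sq_inv z2) (sq_inv b2) => ->.
  done.
have cS : ~: S \subset [set a; a^-1; b^-1 * a; b^-1 * a^-1].
  apply/subsetP => z; rewrite !inE negb_and => /orP [] H.
    have : z \in ~: Iset by rewrite !inE.
    by move/(subsetP sub); rewrite !inE => /orP [] ->; rewrite ?orbT.
  have : b * z \in ~: Iset by rewrite !inE.
  move/(subsetP sub); rewrite !inE => /orP [] /eqP <-; rewrite mulKg eqxx ?orbT //.
have c12 : (12 <= #|'C[b]|)%N.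
  apply: leq_trans (subset_leq_card SC).
  have := cardsC S; rewrite n16 => E.
  have := leq_trans (subset_leq_card cS) (card4 _ _ _ _).
  move=> le4; have : (16 <= #|S| + 4)%N by rewrite -E leq_add2l.
  by move=> h; rewrite -(leq_add2r 4).
have dC : (#|'C[b]| %| 16)%N by rewrite -n16 -cardG; apply: cardSg; exact: subsetT.
have mi : #|'C[b]| \in iota 0 17 by rewrite mem_iota add0n ltnS (dvdn_leq _ dC).
have := allP div_check16 _ mi; rewrite dC c12 /= => /eqP C16.
have CT : 'C[b] = G.
  apply/eqP; rewrite eqEcard subsetT /= C16 cardG n16 //.
apply: ncb; apply: commute_sym; apply/cent1P; rewrite CT inE //.
Qed.
End TwoGroup.

Lemma case9 : n = 9%N \/ n = 18%N -> False.
Proof.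
move=> n9.
have [P sP] := Sylow_exists 3 G.
have cP : #|P| = 9%N by rewrite (card_Hall sP) cardG; case: n9 => ->; rewrite p_part; vm_compute.
have P4 : forall x, x \in P -> x ^+ 4 = 1 -> x = 1.
  move=> x xP /pow1P d4; apply/eqP; rewrite -order_eq1.
  have d9 : (#[x] %| 9)%N by rewrite -cP order_dvdG.
  have : (#[x] %| gcdn 4 9)%N by rewrite dvdn_gcd d4 d9.
  by rewrite dvdn1.
have d3P : (3 %| #|P|)%N by rewrite cP.
have [x1 x1P o1] := Cauchy (isT : prime 3) d3P.
have [x2 x2P x2n] : exists2 x, x \in P & x \notin <[x1]>.
  apply/subsetPn; apply/negP => sub.
  by have := subset_leq_card sub; rewrite cP -orderE o1.
have x21 : x2 != 1 by apply: contraNneq x2n => ->; exact: group1.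
case: (h2 x1 x2) => [/(P4 _ x1P) E|[/(P4 _ x2P) E|[E|E]]].
- by move: o1; rewrite E order1.
- by rewrite E eqxx in x21.
- have E' := P4 _ (groupM x1P x2P) E.
  case/negP: x2n; have -> : x2 = x1^-1 by rewrite -[x2](mulKg x1) E' mulg1.
  by rewrite groupV cycle_id.
- have E' := P4 _ (groupM x1P (groupX 2 x2P)) E.
  have e2 : x2 ^+ 2 = x1^-1 by rewrite -[x2 ^+ 2](mulKg x1) E' mulg1.
  have x23 : x2 ^+ 3 = 1.
    by case: (h3 x2) => // /(P4 _ x2P) E2; rewrite E2 eqxx in x21.
  case/negP: x2n.
  have x24 : x2 ^+ 4 = x2 by rewrite expgSr x23 mul1g.
  have -> : x2 = x1^-1 ^+ 2 by rewrite -e2 -expgM x24.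
  by rewrite groupX // groupV cycle_id.
Qed.

Theorem classify : goodH.
Proof.
have := n_cases; rewrite !inE.
repeat (case/orP => [/eqP E|]); last move/eqP => E.
all: first [ by apply: case_small; rewrite E
           | exact: case6 E | exact: case12 E | exact: case24 E
           | exact: case8 (or_introl E) E
           | by case: (case16 (or_intror E) E)
           | by case: (case9 (or_introl E))
           | by case: (case9 (or_intror E)) ].
Qed.
End Classif.

End MD.
Import MD.

Module ME.
Local Open Scope group_scope.

Section Embed.
Variables (gT : finGroupType) (H : {group gT}).
Hypothesis Hidx : #|[set: gT] : H| <= 4.
Hypothesis Hcore : gcore H [set: gT] = 1.

Let R := rcosets H [set: gT].
Let e := enum R.
Let m := size e.

Lemma m_le4 : m <= 4.
Proof. by rewrite /m /e -cardE. Qed.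

Lemma R_mul X x : X \in R -> X :* x \in R.
Proof.
case/rcosetsP=> y _ ->; apply/rcosetsP; exists (y * x); first exact: in_setT.
by rewrite rcosetM.
Qed.

Lemma nth_R i : i < m -> nth set0 e i \in R.
Proof. by move=> lt; rewrite -mem_enum -/e mem_nth. Qed.

Lemma idx_lt X : X \in R -> index X e < m.
Proof. by move=> XR; rewrite index_mem mem_enum. Qed.

Definition sig_fun (x : gT) (i : 'I_4) : 'I_4 :=
  if i < m then inord (index (nth set0 e i :* x) e) else i.

Lemma sig_val x (i : 'I_4) : i < m -> (sig_fun x i : nat) = index (nth set0 e i :* x) e.
Proof.
move=> lt; rewrite /sig_fun lt inordK //.
exact: leq_trans (idx_lt (R_mul x (nth_R lt))) m_le4.
Qed.

Lemma sig_lt x (i : 'I_4) : i < m -> sig_fun x i < m.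
Proof. by move=> lt; rewrite sig_val // idx_lt // R_mul // nth_R. Qed.

Lemma sig_nth x (i : 'I_4) : i < m -> nth set0 e (sig_fun x i) = nth set0 e i :* x.
Proof. by move=> lt; rewrite sig_val // nth_index // mem_enum R_mul // nth_R. Qed.

Lemma sig_inj x : injective (sig_fun x).
Proof.
move=> i j E.
case: (ltnP i m) => Hi; case: (ltnP j m) => Hj.
- have : nth set0 e i :* x = nth set0 e j :* x by rewrite -!sig_nth // E.
  move/(congr1 (fun X => X :* x^-1)); rewrite -!rcosetM mulgV !rcoset1 => /eqP.
  rewrite nth_uniq ?enum_uniq // => /eqP; exact: val_inj.
- have Hj' : (j < m) = false by rewrite ltnNge Hj.
  by have := sig_lt x Hi; rewrite E /sig_fun Hj' Hj'.
- have Hi' : (i < m) = false by rewrite ltnNge Hi.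
  by have := sig_lt x Hj; rewrite -E /sig_fun Hi' Hi'.
- have Hi' : (i < m) = false by rewrite ltnNge Hi.
  have Hj' : (j < m) = false by rewrite ltnNge Hj.
  by move: E; rewrite /sig_fun Hi' Hj'.
Qed.

Definition sig4 (x : gT) : {perm 'I_4} := perm (@sig_inj x).

Lemma sigM x y : sig4 (x * y) = sig4 x * sig4 y.
Proof.
apply/permP => i; rewrite permM !permE.
case: (ltnP i m) => Hi.
- apply: ord_inj; rewrite sig_val // sig_val ?sig_lt // sig_nth //.
  by rewrite rcosetM.
- have Hi' : (i < m) = false by rewrite ltnNge Hi.
  by rewrite /sig_fun Hi' /= Hi'.
Qed.

Lemma sig1 : sig4 1 = 1.
Proof. by apply: (mulgI (sig4 1)); rewrite -sigM !mulg1. Qed.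

Lemma sig_ker x : sig4 x = 1 -> x = 1.
Proof.
move=> E.
have Hx : forall X, X \in R -> X :* x = X.
  move=> X XR.
  have lt := idx_lt XR.
  have lt4 : index X e < 4 by exact: leq_trans lt m_le4.
  have := permE (@sig_inj x) (Ordinal lt4); rewrite -/(sig4 x) E perm1 => E1.
  have := sig_nth x (i := Ordinal lt4) lt.
  by rewrite -E1 /= nth_index // mem_enum.
have : x \in 'C(R | 'Rs).
  by apply/astabP => X XR; rewrite /= rcosetE Hx.
by rewrite astabRs_rcosets Hcore => /set1P.
Qed.

Lemma sig_injective : injective sig4.
Proof.
move=> x y E.
have K : sig4 (x * y^-1) = 1 by rewrite sigM E -sigM mulgV sig1.
by rewrite -(mulgKV y x) (sig_ker K) mul1g.
Qed.
End Embed.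

End ME.
Import ME.

Module MF.
Local Open Scope group_scope.

Lemma sec_of (gT : finGroupType) (phi : gT -> S4)
  (phiM : forall x y, phi (x * y) = phi x * phi y) (phi_inj : injective phi)
  (G : absgroup) (g : G -> gT) (gM : forall a b, g (gmul a b) = g a * g b)
  (g_inj : injective g) (g_surj : forall x, exists a, g a = x) : section_of S4 G.
Proof.
pose mphi : {morphism [set: gT] >-> S4} := Morphism (in2W phiM).
exists (mphi @* [set: gT])%G, 1%G, (fun a => coset 1 (phi (g a))).
have N1 : forall z : S4, z \in 'N(1) by move=> z; rewrite norm1 inE.
split.
- exact: normal1.
- move=> a b /(injmP (@coset1_injm S4)) E.
  by apply/g_inj/phi_inj/E; exact: N1.
- by move=> a b /=; rewrite gM phiM morphM.
- move=> c; split.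
  + case/morphimP=> z _ /morphimP [w _ _ ->] ->.
    by have [a <-] := g_surj w; exists a.
  + case=> a <-; apply: mem_quotient.
    by apply: (mem_morphim mphi); rewrite inE.
Qed.

End MF.
Import MF.

Theorem proposition4 :
  satisfies_basis (fin_group S4) /\
  (forall G : absgroup, satisfies_basis G -> section_of S4 G).
Proof.
split; first exact: part1.
move=> G [d1 d2 d3 d4 d5].
have [t [f [g [fM fK gK]]]] := build d1.
have t1 := proj1 (dId1_f fK gK) d1.
have t2 := proj1 (dId2_f fM fK gK) d2.
have t3 := proj1 (dId3_f fM fK gK) d3.
have t4 := proj1 (dId4_f fM fK gK) d4.
have t5 := proj1 (dId5_f fM fK gK) d5.
have [H [idx core]] := classify t1 t2 t3 t4 t5.
have gM : forall a b : G, g (gmul a b) = (g a * g b)%g.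
  by move=> a b; apply: (can_inj gK); rewrite fM !fK.
have gs : forall x, exists a, g a = x by move=> x; exists (f x); rewrite gK.
exact (sec_of (sigM idx) (@sig_injective _ _ idx core) gM (can_inj fK) gs).
Qed.
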